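(* Let $(E,B,p,\Gamma)$ be a compact graph bundle, let $F:E\to E$ and $f:B\to B$ be continuous with $p\circ F=f\circ p$, $(B,f)$ minimal, and let $M$ be a minimal set of $F$ with $p(M)=B$. Let $H$ be the homeo-part of $f$, and suppose that $M_z$ is finite for some $z\in H$. Then $N:=\min\{\operatorname{card}M_x: x\in H\}$ is finite and there is a residual set $R\subseteq B$ such that $\operatorname{card}M_b=N$ for every $b\in R$.
   Context: A compact graph bundle $(E,B,p,\Gamma)$: $E,B$ compact metric spaces, $\Gamma$ a graph (nonempty compact metric space that is a union of finitely many arcs pairwise disjoint or meeting only at end-points), $p:E\to B$ a continuous surjection such that each $b\in B$ has an open neighbourhood $U$ and a homeomorphism $h:p^{-1}(U)\to U\times\Gamma$ with $\mathrm{pr}_1\circ h=p$. $M_b=M\cap p^{-1}(b)$. Minimal map: no proper nonempty closed invariant subset; minimal set: nonempty closed invariant set on which the map is minimal. Homeo-part of a continuous selfmap $f$ of a compact metric space $X$: the set $H$ of points $x_0\in X$ whose full orbit $\{x\in X:\exists i,j\ge0,\ f^i(x)=f^j(x_0)\}$ is of the form $\{\dots,x_{-2},x_{-1},x_0,x_1,x_2,\dots\}$ with $f(x_n)=x_{n+1}$ for every integer $n$. Residual: complement of a countable union of nowhere dense sets. *)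

(* Defs.v *)
From HB Require Import structures.
From mathcomp Require Import all_boot all_order all_algebra.
From mathcomp Require Import all_classical all_reals all_analysis.
Set Implicit Arguments. Unset Strict Implicit. Unset Printing Implicit Defensive.
Import Order.TTheory GRing.Theory Num.Theory.
Local Open Scope classical_set_scope.
Local Open Scope ring_scope.

(* A compact metric space: a Hausdorff (hence metric) pseudometric space
   whose underlying set is compact. *)
Definition compact_metric (R : realType) (X : pseudoMetricType R) : Prop :=
  hausdorff_space X /\ compact [set: X].

(* An arc in X with parametrisation a : [0,1] -> X (continuous and injective
   on [0,1]; in a Hausdorff space this is an embedding). *)
Definition is_arc (R : realType) (X : topologicalType) (a : R -> X) : Prop :=
  {within `[0%R, 1%R], continuous a} /\ set_inj `[0%R, 1%R] a.

Definition is_graph (R : realType) (G : pseudoMetricType R) : Prop :=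
  compact_metric G /\ [set: G] !=set0 /\
  exists (n : nat) (a : 'I_n -> R -> G),
    (forall i, is_arc (a i)) /\
    \bigcup_(i in [set: 'I_n]) (a i @` `[0%R, 1%R]) = [set: G] /\
    (forall i j, i != j ->
       (a i @` `[0%R, 1%R]) `&` (a j @` `[0%R, 1%R])
         `<=` [set a i 0%R; a i 1%R] `&` [set a j 0%R; a j 1%R]).

Definition graph_bundle (R : realType) (E B G : pseudoMetricType R)
    (p : E -> B) : Prop :=
  compact_metric E /\ compact_metric B /\ is_graph G /\
  continuous p /\ p @` [set: E] = [set: B] /\
  forall b : B, exists U : set B, open U /\ U b /\
    exists (h : E -> B * G) (g : B * G -> E),
      {within p @^-1` U, continuous h} /\
      {within U `*` [set: G], continuous g} /\
      (forall x, (p @^-1` U) x ->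
         (U `*` [set: G]) (h x) /\ g (h x) = x /\ (h x).1 = p x) /\
      (forall y, (U `*` [set: G]) y -> (p @^-1` U) (g y) /\ h (g y) = y).

Definition minimal_map (T : topologicalType) (f : T -> T) : Prop :=
  forall A : set T, A !=set0 -> closed A -> f @` A `<=` A -> A = [set: T].

(* Minimal set: nonempty closed invariant set on which the map is minimal
   (closed subsets of the closed set M are the same in M and in T). *)
Definition minimal_set (T : topologicalType) (f : T -> T) (M : set T) : Prop :=
  M !=set0 /\ closed M /\ f @` M `<=` M /\
  forall A : set T, A `<=` M -> A !=set0 -> closed A -> f @` A `<=` A -> A = M.

Definition fibre (E B : Type) (p : E -> B) (M : set E) (b : B) : set E :=
  M `&` p @^-1` [set b].

Definition full_orbit (T : Type) (f : T -> T) (x0 : T) : set T :=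
  [set x | exists i j : nat, iter i f x = iter j f x0].

Definition homeo_part (T : Type) (f : T -> T) : set T :=
  [set x0 | exists x : int -> T, x 0 = x0 /\ (forall n : int, f (x n) = x (n + 1)) /\
            full_orbit f x0 = range x].

Definition has_card (T : Type) (A : set T) (n : nat) : Prop := (A #= `I_n)%card.

Definition nowhere_dense (T : topologicalType) (A : set T) : Prop :=
  (closure A)° = set0.

Definition residual (T : topologicalType) (S : set T) : Prop :=
  exists A : nat -> set T, (forall k, nowhere_dense (A k)) /\
    S = ~` \bigcup_k A k.

(* Main.v *)
Require Import Defs.
From HB Require Import structures.
From mathcomp Require Import all_boot all_order all_algebra.
From mathcomp Require Import all_classical all_reals all_analysis.
From mathcomp Require Import zify.
Import Order.TTheory GRing.Theory Num.Theory.
Local Open Scope classical_set_scope.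
Local Open Scope ring_scope.
Set Implicit Arguments. Unset Strict Implicit. Unset Printing Implicit Defensive.

Lemma img_closed (T : topologicalType) (f : T -> T) (A : set T) :
  hausdorff_space T -> compact [set: T] -> continuous f -> closed A ->
  closed (f @` A).
Proof.
move=> hT cT cf cA; apply: compact_closed => //.
apply: continuous_compact; first exact: continuous_subspaceT.
exact: (subclosed_compact cA cT).
Qed.

Lemma min_surj (T : topologicalType) (f : T -> T) :
  hausdorff_space T -> compact [set: T] -> continuous f -> minimal_map f ->
  forall y, exists x, f x = y.
Proof.
move=> hT cT cf mf y.
have ne : (f @` setT) !=set0 by exists (f y); exists y.
have inv : f @` (f @` setT) `<=` f @` setT by move=> _ [z [x _ <-] <-]; exists (f x).
have e := mf (f @` setT) ne (@img_closed T f setT hT cT cf closedT) inv.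
have : (f @` setT) y by rewrite e.
by case=> x _ <-; exists x.
Qed.

Lemma min_irred (T : topologicalType) (f : T -> T) (A : set T) :
  compact [set: T] -> continuous f -> minimal_map f -> closed A ->
  (forall y, exists2 x, A x & f x = y) -> forall x, A x.
Proof.
move=> cT cf mf cA sA x0.
pose Am (m : nat) := [set x | forall k, (k < m)%N -> A (iter k f x)].
pose Ainf := [set x | forall k, A (iter k f x)].
have back : forall m y, exists x, Am m x /\ iter m f x = y.
  elim=> [|m IH] y; first by exists y; split.
  have [x [Amx <-]] := IH y.
  have [z Az fz] := sA x.
  exists z; split; last by rewrite iterSr fz.
  case=> [|k] /=; first by [].
  by rewrite ltnS -iterS iterSr fz; apply: Amx.
have citer : forall k, continuous (iter k f).
  elim=> [|k IH] /=; first by move=> ?; exact: cvg_id.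
  by move=> x; apply: continuous_comp; [exact: IH|exact: cf].
have cpre : forall k, closed (iter k f @^-1` A).
  by move=> k; apply: preimage_closed => //; move=> x _; exact: citer.
have Ainf_ne : Ainf !=set0.
  pose F := filter_from [set: nat] Am.
  have FF : Filter F.
    apply: filter_from_filter; first by exists 0%N.
    move=> i j _ _; exists (maxn i j) => // x Ax; split=> k km; apply: Ax.
      by apply: (leq_trans km); exact: leq_maxl.
    by apply: (leq_trans km); exact: leq_maxr.
  have PF : ProperFilter F.
    apply: filter_from_proper => m _.
    by have [x [Amx _]] := back m x0; exists x.
  have [p [_ clp]] := cT F PF (filterT).
  exists p => k.
  have FA : F (Am k.+1) by exists k.+1.
  apply: (cpre k) => B nB.
  have [z [Az Bz]] := clp _ _ FA nB.
  by exists z; split => //; apply: Az.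
have clAinf : closed Ainf.
  move=> p clp k; apply: (cpre k) => B nB.
  have [z [Az Bz]] := clp _ nB.
  by exists z; split => //; apply: Az.
have invA : f @` Ainf `<=` Ainf.
  by move=> _ [x Ax <-] k; rewrite -iterSr; apply: Ax.
have := mf Ainf Ainf_ne clAinf invA.
move=> e; have : Ainf x0 by rewrite e.
by move=> /(_ 0%N).
Qed.

Definition ND (T : topologicalType) (C : set T) := closed C /\ C° = set0.

Lemma ND_img (T : topologicalType) (f : T -> T) (C : set T) :
  hausdorff_space T -> compact [set: T] -> continuous f -> minimal_map f ->
  ND C -> ND (f @` C).
Proof.
move=> hT cT cf mf [cC iC]; split; first exact: img_closed.
apply/seteqP; split=> [y0 Uy0|//].
set U := (f @` C)°.
have oU : open U by exact: open_interior.
pose A := C `|` f @^-1` (~` U).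
have cA : closed A.
  apply: closedU => //; apply: preimage_closed; first by move=> x _; exact: cf.
  exact: open_closedC.
have sA : forall y, exists2 x, A x & f x = y.
  move=> y; have [Uy|nUy] := pselect (U y).
    by have [x Cx <-] := interior_subset Uy; exists x => //; left.
  by have [x fx] := min_surj hT cT cf mf y; exists x => //; right; rewrite /= fx.
have allA := min_irred cT cf mf cA sA.
have [x0 fx0] := min_surj hT cT cf mf y0.
have : C° x0.
  rewrite /interior nbhsE; exists (f @^-1` U).
    split; last by rewrite /= fx0.
    by apply: open_comp => // x _; exact: cf.
  by move=> w Uw; case: (allA w) => // /(_ Uw).
by rewrite iC.
Qed.

Lemma ND_pre (T : topologicalType) (f : T -> T) (C : set T) :
  hausdorff_space T -> compact [set: T] -> continuous f -> minimal_map f ->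
  ND C -> ND (f @^-1` C).
Proof.
move=> hT cT cf mf [cC iC]; split.
  by apply: preimage_closed => // x _; exact: cf.
apply/seteqP; split=> [x0 Wx0|//].
set W := (f @^-1` C)°.
pose A := ~` W.
have cA : closed A by apply: open_closedC; exact: open_interior.
have cfA : closed (f @` A) := img_closed hT cT cf cA.
pose V := ~` (f @` A).
have oV : open V by rewrite /V openC.
have VC : V `<=` C.
  move=> z Vz; have [w fw] := min_surj hT cT cf mf z.
  have [Ww|nWw] := pselect (W w).
    by rewrite -fw; exact: (interior_subset Ww).
  by exfalso; apply: Vz; exists w.
have V0 : V `<=` set0 by rewrite -iC; rewrite -open_subsetE.
have sA : forall y, exists2 x, A x & f x = y.
  move=> y; have [[x Ax fx]|nfy] := pselect ((f @` A) y); first by exists x.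
  by have := V0 y nfy.
by have := min_irred cT cf mf cA sA x0.
Qed.

Definition imgs (T : Type) (f : T -> T) i (C : set T) := iter i (fun S => f @` S) C.
Definition pres (T : Type) (f : T -> T) j (C : set T) := iter j (fun S => f @^-1` S) C.

Lemma pres_mem (T : Type) (f : T -> T) j (S : set T) b :
  pres f j S b <-> S (iter j f b).
Proof.
elim: j b => [|j IH] b; first by [].
change (pres f j S (f b) <-> S (iter j.+1 f b)).
by rewrite iterSr -IH.
Qed.

Lemma imgs_mem (T : Type) (f : T -> T) i (S : set T) u :
  S u -> imgs f i S (iter i f u).
Proof.
move=> Su; elim: i => [|i IH] //=.
by exists (iter i f u).
Qed.

Lemma ND_iter (T : topologicalType) (f : T -> T) (C : set T) i j :
  hausdorff_space T -> compact [set: T] -> continuous f -> minimal_map f ->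
  ND C -> ND (pres f j (imgs f i C)).
Proof.
move=> hT cT cf mf nC.
have : ND (imgs f i C).
  by elim: i => [|i IH] //=; apply: ND_img.
elim: j => [|j IH] //= nI.
by apply: ND_pre => //; apply: IH.
Qed.

Definition Qk (R : realType) (T : pseudoMetricType R) (f : T -> T) (k : nat) :=
  [set y | exists u v, f u = y /\ f v = y /\ ~ ball u (k.+1%:R^-1 : R) v].

Lemma Q_ND (R : realType) (T : pseudoMetricType R) (f : T -> T) k :
  hausdorff_space T -> compact [set: T] -> continuous f -> minimal_map f ->
  ND (closure (Qk f k)).
Proof.
move=> hT cT cf mf; split; first exact: closed_closure.
apply/seteqP; split=> [y1 Uy1|//].
set U := (closure (Qk f k))°.
have oU : open U by exact: open_interior.
have [y0 [Qy0 Uy0]] : (Qk f k `&` U) !=set0.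
  by apply: (interior_subset Uy1); apply: open_nbhs_nbhs.
have [u0 [v0 [fu0 [fv0 nb]]]] := Qy0.
set e : R := k.+1%:R^-1.
have e0 : (0 < e)%R by rewrite invr_gt0.
pose W := (ball u0 (e / 2))° `&` f @^-1` U.
have oW : open W.
  apply: openI; first exact: open_interior.
  by apply: open_comp => // x _; exact: cf.
pose A := ~` W.
have cA : closed A by exact: open_closedC.
have cfA : closed (f @` A) := img_closed hT cT cf cA.
have sA : forall y, exists2 x, A x & f x = y.
  move=> y; have [Uy|nUy] := pselect (U y); last first.
    have [x fx] := min_surj hT cT cf mf y.
    by exists x => // -[_]; rewrite /= fx.
  suff : (f @` A) y by case=> x Ax fx; exists x.
  apply: cfA => N nN.
  have nNU : nbhs y (N `&` U) by apply: filterI => //; apply: open_nbhs_nbhs.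
  have [y' [Qy' [Ny' Uy']]] := interior_subset Uy _ nNU.
  have [u [v [fu [fv nuv]]]] := Qy'.
  have [bu|nbu] := pselect (ball u0 (e / 2) u); last first.
    exists y'; split => //; exists u => //.
    by move=> [/interior_subset].
  have [bv|nbv] := pselect (ball u0 (e / 2) v); last first.
    exists y'; split => //; exists v => //.
    by move=> [/interior_subset].
  by exfalso; apply: nuv; apply: (ball_splitr bu bv).
have allA := min_irred cT cf mf cA sA.
apply: (allA u0); split.
  by apply: nbhsx_ballx; rewrite divr_gt0.
by rewrite /= fu0.
Qed.

Lemma sep_k (R : realType) (T : pseudoMetricType R) (u v : T) :
  hausdorff_space T -> u <> v ->
  exists k, forall k', (k <= k')%N ->
    ~ ball u ((k'.+1%:R^-1 : R) + k'.+1%:R^-1) v.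
Proof.
move=> hT uv.
have [eps neps] : exists eps : {posnum R}, ~ ball u eps%:num v.
  apply: contrapT => H; apply: uv; apply: (close_eq hT).
  rewrite ball_close => eps; apply: contrapT => nb; apply: H; by exists eps.
have [k hk] := ltr_add_invr (y := 0%R) (x := eps%:num / 2) (divr_gt0 (gt0 _) (ltr0Sn _ 1)).
exists k => k' kk' b; apply: neps.
apply: le_ball b.
have le1 : (k'.+1%:R^-1 : R) <= k.+1%:R^-1.
  by rewrite lef_pV2 ?posrE ?ltr0Sn // ler_nat ltnS.
rewrite add0r in hk.
rewrite [leRHS](splitr eps%:num).
by apply: lerD; apply: ltW; apply: (le_lt_trans le1).
Qed.

Lemma homeo_of_uniq (T : Type) (f : T -> T) (b : T) :
  (forall y, exists x, f x = y) ->
  (forall i j u v, f u = f v -> iter i f (f u) = iter j f b -> u = v) ->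
  homeo_part f b.
Proof.
move=> sf P.
pose g y := projT1 (cid (sf y)).
have fg : forall y, f (g y) = y by move=> y; rewrite /g; case: cid.
have fgn : forall n y, iter n f (iter n g y) = y.
  elim=> [|n IH] y //; by rewrite iterSr iterS fg IH.
pose x (n : int) := match n with Posz m => iter m f b | Negz m => iter m.+1 g b end.
exists x; split; first by [].
split.
  case=> [m|[|m]].
  - have -> : (Posz m + 1 = Posz m.+1)%R by lia.
    by [].
  - have -> : (Negz 0 + 1 = 0)%R by lia.
    by rewrite /= fg.
  - have -> : (Negz m.+1 + 1 = Negz m)%R by lia.
    by rewrite [in LHS]/= fg.
have uniq : forall i y w, iter i f y = iter i f w ->
    (exists j, iter i f w = iter j f b) -> y = w.
  elim=> [|i IH] y w e [j ej]; first by [].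
  have fyw : f y = f w.
    apply: IH; first by rewrite -!iterSr.
    by exists j; rewrite -iterSr.
  by apply: (P i j) => //; rewrite -iterSr e.
apply/seteqP; split.
  move=> y [i [j e]].
  have [ji|ij] := leqP i j.
    exists (Posz (j - i)) => //; rewrite /x; apply: esym; apply: (uniq i).
      by rewrite -iterD subnKC.
    by exists j; rewrite -iterD subnKC.
  exists (Negz (i - j).-1) => //; rewrite /x prednK ?subn_gt0 //.
  have E : iter i f (iter (i - j) g b) = iter j f b.
    by rewrite -{1}(subnKC (ltnW ij)) iterD fgn.
  apply: esym; apply: (uniq i); last by exists j.
  by rewrite e E.
move=> _ [[m|m] _ <-] /=.
  by exists 0%N, m.
by exists m.+1, 0%N; rewrite fgn.
Qed.

Lemma per_inj (T : topologicalType) (f : T -> T) (u : T) (d : nat) :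
  hausdorff_space T -> compact [set: T] -> continuous f -> minimal_map f ->
  (0 < d)%N -> iter d f u = u -> injective f.
Proof.
move=> hT cT cf mf d0 du.
have acc := hausdorff_accessible hT.
have fincl := (@accessible_finite_set_closed T).1 acc.
pose O := (fun t => iter t f u) @` `I_d.
have finO : finite_set O by apply: finite_image; exact: finite_II.
have OT : O = setT.
  apply: mf; first by exists u; exists 0%N.
    exact: fincl.
  move=> _ [_ [t td <-] <-].
  have [td1|] := ltnP t.+1 d; first by exists t.+1.
  move=> dt; rewrite -iterS; have -> : t.+1 = d by apply/eqP; rewrite eqn_leq dt td.
  by rewrite du; exists 0%N.
have finT : finite_set [set: T] by rewrite -OT.
move=> a b fab; apply: contrapT => nab.
pose A := ~` [set a].
have cA : closed A by apply: fincl; exact: (sub_finite_set _ finT).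
have sA : forall y, exists2 x, A x & f x = y.
  move=> y; have [->|nya] := pselect (y = f a).
    by exists b => //; rewrite /A /= => ba; apply: nab.
  have [x fx] := min_surj hT cT cf mf y.
  by exists x => // xa; apply: nya; rewrite -fx xa.
by apply: (min_irred cT cf mf cA sA a).
Qed.

Lemma iter_injective (T : Type) (f : T -> T) n :
  injective f -> injective (iter n f).
Proof.
move=> fi; elim: n => [|n IH] a b //= e.
by apply: IH; apply: fi.
Qed.

Lemma homeo_uniq (T : topologicalType) (f : T -> T) (b : T) :
  hausdorff_space T -> compact [set: T] -> continuous f -> minimal_map f ->
  homeo_part f b -> forall n y, iter n f y = iter n f b -> y = b.
Proof.
move=> hT cT cf mf [x [x0 [xs fo]]] n y e.
have iterx : forall k a, iter k f (x a) = x (a + k%:Z)%R.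
  elim=> [|k IH] a /=; first by rewrite addr0.
  rewrite IH xs; congr x; lia.
have : full_orbit f b y by exists n, n.
rewrite fo => -[m _ xm].
have exn : x (m + n%:Z)%R = x n.
  by rewrite -iterx xm e -x0 iterx; congr x; lia.
have [m0|m0] := pselect (m = 0%R); first by rewrite -xm m0 x0.
suff fi : injective f by exact: (iter_injective fi e).
case: m m0 xm exn => [[|d]|k] // _ _ exn.
  apply: (per_inj hT cT cf mf (u := x n) (d := d.+1)) => //.
  by rewrite iterx -exn; congr x; lia.
apply: (per_inj hT cT cf mf (u := x (Negz k + n%:Z)%R) (d := k.+1)) => //.
by rewrite iterx exn; congr x; lia.
Qed.

Lemma orbit_dense (T : topologicalType) (f : T -> T) (b : T) (U : set T) :
  continuous f -> minimal_map f -> open U -> U !=set0 ->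
  exists n, U (iter n f b).
Proof.
move=> cf mf oU [u Uu].
pose Orb := range (fun n => iter n f b).
have CT : closure Orb = setT.
  apply: mf; last first.
  - move=> _ [p Cp <-] N nN.
    have := Cp _ (cf p N nN).
    move=> [_ [[n _ <-] /= Nn]].
    by exists (iter n.+1 f b); split => //; exists n.+1.
  - exact: closed_closure.
  - by exists b; apply: subset_closure; exists 0%N.
have : closure Orb u by rewrite CT.
move=> /(_ U (open_nbhs_nbhs (conj oU Uu))) [_ [[n _ <-] Un]].
by exists n.
Qed.

Lemma card_cover (T : Type) (A : set T) n (t0 : T) :
  has_card A n -> exists s : nat -> T, forall y, A y -> exists2 i, (i < n)%N & s i = y.
Proof.
rewrite /has_card card_eq_sym => /ocard_eqP /bijPex [g [_ _ gs]].
exists (fun i => odflt t0 (g i)) => y Ay.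
have [i ni gi] := gs (Some y) (ex_intro2 _ _ y Ay erefl).
by exists i => //; rewrite gi.
Qed.

Lemma card_inj (T : Type) (A : set T) m (t0 : T) : (`I_m #<= A)%card ->
  exists e : nat -> T, (forall i, (i < m)%N -> A (e i)) /\
    (forall i j, (i < m)%N -> (j < m)%N -> e i = e j -> i = j).
Proof.
elim/Pchoice: T => T in A t0 *.
rewrite -card_le_some => /pcard_leP H.
have [g gf gi] := injfunPex.1 H.
exists (fun i => odflt t0 (g i)); split.
  by move=> i im; have [a Aa <-] := gf i im.
move=> i j im jm e; apply: gi; rewrite ?inE //.
have [a Aa ga] := gf i im.
have [c' Ac' gc'] := gf j jm.
by rewrite -ga -gc' /= in e *; rewrite e.
Qed.

Lemma finite_max (n : nat) (Q : nat -> nat -> Prop) :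
  (forall i, (i < n)%N -> exists k, forall k', (k <= k')%N -> Q i k') ->
  exists K, forall i, (i < n)%N -> forall k', (K <= k')%N -> Q i k'.
Proof.
elim: n => [|n IH] H; first by exists 0%N.
have [K1 HK1] := IH (fun i ii => H i (ltnW ii)).
have [k Hk] := H n (ltnSn n).
exists (maxn K1 k) => i; rewrite ltnS leq_eqVlt => /orP[/eqP ->|ii] k' kk'.
  by apply: Hk; apply: leq_trans kk'; exact: leq_maxr.
by apply: HK1 => //; apply: leq_trans kk'; exact: leq_maxl.
Qed.

Lemma cover_card (R : realType) (T : pseudoMetricType R) (A : set T) (N : nat)
    (t0 : T) : hausdorff_space T ->
  (forall k, exists s : 'I_N -> T, forall y, A y ->
     exists i, ball (s i) (k.+1%:R^-1 : R) y) ->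
  ~ (`I_N.+1 #<= A)%card.
Proof.
move=> hT cov /(card_inj t0) [e [eA einj]].
have [K HK] : exists K, forall i, (i < N.+1)%N -> forall k', (K <= k')%N ->
    forall j, (j < N.+1)%N -> i <> j ->
    ~ ball (e i) ((k'.+1%:R^-1 : R) + k'.+1%:R^-1) (e j).
  apply: finite_max => i iN.
  have hyp : forall j, (j < N.+1)%N -> exists k, forall k', (k <= k')%N ->
      i <> j -> ~ ball (e i) ((k'.+1%:R^-1 : R) + k'.+1%:R^-1) (e j).
    move=> j jN; have [ij|nij] := pselect (i = j); first by exists 0%N.
    have [k Hk] := sep_k hT (fun eij => nij (einj i j iN jN eij)).
    by exists k => k' kk' _; apply: Hk.
  have [K' HK'] := finite_max hyp.
  by exists K' => k' kk' j jN; apply: HK'.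
have [s Hs] := cov K.
have [h Hh] : exists h : nat -> nat, forall i, (i < N.+1)%N ->
    exists2 jj : 'I_N, nat_of_ord jj = h i & ball (s jj) (K.+1%:R^-1 : R) (e i).
  suff [h Hh] : {h : nat -> nat & forall i, (i < N.+1)%N ->
    exists2 jj : 'I_N, nat_of_ord jj = h i & ball (s jj) (K.+1%:R^-1 : R) (e i)}.
    by exists h.
  apply: (@choice _ _ (fun i j => (i < N.+1)%N ->
    exists2 jj : 'I_N, nat_of_ord jj = j & ball (s jj) (K.+1%:R^-1 : R) (e i))).
  move=> i; have [iN|iN] := ltnP i N.+1; last first.
    by exists 0%N.
  have [jj bj] := Hs (e i) (eA i iN).
  by exists (nat_of_ord jj) => _; exists jj.
have := @pigeonhole N.+1 N h.
have hinj : {in `I_N.+1 &, injective h}.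
  move=> i j; rewrite !inE /= => iN jN hij.
  apply: contrapT => nij.
  have [ji ei bi] := Hh i iN; have [jj ej bj] := Hh j jN.
  have jij : ji = jj by apply: val_inj; rewrite /= ei ej.
  rewrite jij in bi.
  apply: (HK i iN K (leqnn K) j jN nij).
  apply: ball_triangle (ball_sym bi) bj.
move=> /(_ hinj) H.
have : (N.+1 <= N)%N.
  apply: H => _ [i iN <-].
  by have [jj <- _] := Hh i iN; exact: ltn_ord.
by rewrite ltnn.
Qed.

Lemma ND_nd (T : topologicalType) (C : set T) : ND C -> nowhere_dense C.
Proof. by move=> [cC iC]; rewrite /nowhere_dense -(proj1 (closure_id C) cC). Qed.

Local Close Scope ring_scope.
Unset Implicit Arguments.

Theorem proposition3 (R : realType) (E B G : pseudoMetricType R)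
  (p : E -> B) (F : E -> E) (f : B -> B) (M : set E) :
  graph_bundle G p ->
  continuous F -> continuous f -> p \o F = f \o p ->
  minimal_map f -> minimal_set F M -> p @` M = [set: B] ->
  (exists z, homeo_part f z /\ finite_set (fibre p M z)) ->
  exists N : nat,
    (exists x, homeo_part f x /\ has_card (fibre p M x) N) /\
    (forall x k, homeo_part f x -> has_card (fibre p M x) k -> (N <= k)%N) /\
    exists Rs : set B, residual Rs /\ forall b, Rs b -> has_card (fibre p M b) N.
Proof.
move=> [[hE cE] [[hB cB] [_ [cp [psurj _]]]]] cF cf pFfp mf
  [[m0 Mm0] [cM [FMsub Mmin]]] pM [z [Hz finz]].
have fsurj := min_surj hB cB cf mf.
have FM : F @` M = M.
  apply: Mmin => //.
  - by exists (F m0); exists m0.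
  - exact: img_closed.
  - by move=> _ [y [w Mw <-] <-]; exists (F w) => //; apply: FMsub; exists w.
have back : forall n y, M y -> exists2 w, M w & iter n F w = y.
  elim=> [|n IH] y My; first by exists y.
  have : (F @` M) y by rewrite FM.
  case=> y' My' <-; have [w Mw <-] := IH y' My'.
  by exists w => //; rewrite iterS.
have pit : forall n e, p (iter n F e) = iter n f (p e).
  elim=> [|n IH] e //=.
  by have := congr1 (fun h => h (iter n F e)) pFfp => /= ->; rewrite IH.
have fne : forall b, exists e, M e /\ p e = b.
  move=> b; have : (p @` M) b by rewrite pM.
  by case=> e Me <-; exists e.
pose P n := exists x, homeo_part f x /\ has_card (fibre p M x) n.
have exN : exists n, `[< P n >].
  by have [n hn] := finz; exists n; apply/asboolP; exists z.
case: (ex_minnP exN) => N /asboolP [xs [Hxs cxs]] Nmin.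
exists N; split; first by exists xs.
split; first by move=> x k hx ck; apply: Nmin; apply/asboolP; exists x.
have [e0 [Me0 pe0]] := fne xs.
have [s0 Hs0] := card_cover e0 cxs.
pose ek (k : nat) : R := (k.+1%:R^-1)%R.
have ek0 : forall k, (0 < ek k)%R by move=> k; rewrite invr_gt0 ltr0Sn.
pose O k := [set b | exists s : 'I_N -> E, forall y, M y -> p y = b ->
  exists i, (ball (s i) (ek k))° y].
have Oopen : forall k, open (O k).
  move=> k; rewrite openE => b [s Hs].
  pose V := \bigcup_(i in [set: 'I_N]) (ball (s i) (ek k))°.
  have oV : open V by apply: bigcup_open => i _; exact: open_interior.
  pose K := M `&` ~` V.
  have cK : closed K by apply: closedI => //; exact: open_closedC.
  have cpK : closed (p @` K).
    apply: compact_closed => //; apply: continuous_compact.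
      exact: continuous_subspaceT.
    exact: (subclosed_compact cK cE).
  pose W := ~` (p @` K).
  have oW : open W by rewrite /W openC.
  have Wb : W b.
    move=> [y [My nVy] pyb]; apply: nVy.
    by have [i Hi] := Hs y My pyb; exists i.
  rewrite /interior; apply: (@filterS _ _ _ W); last first.
    by apply: open_nbhs_nbhs; split.
  move=> b' Wb'; exists s => y My pyb'.
  have [Vy|nVy] := pselect (V y); first by case: Vy => i _ Hi; exists i.
  by exfalso; apply: Wb'; exists y => //; rewrite -pyb'.
have Odense : forall k n, O k (iter n f xs).
  move=> k n; exists (fun i => iter n F (s0 i)) => y My py.
  have [w Mw wy] := back n y My.
  have pw : p w = xs.
    apply: (homeo_uniq hB cB cf mf Hxs (n:=n)).
    by rewrite -pit wy.
  have [i iN si] := Hs0 w (conj Mw pw).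
  exists (Ordinal iN) => /=; rewrite si wy.
  exact: (nbhsx_ballx y (ek k) (ek0 k)).
have ND_O : forall k, ND (~` O k).
  move=> k; split; first exact: open_closedC.
  apply/seteqP; split=> [b ib|//].
  have [n Hn] := orbit_dense xs cf mf (@open_interior _ (~` O k)) (ex_intro _ b ib).
  by apply: (interior_subset Hn); apply: Odense.
pose D i j k := pres f j (imgs f i (closure (Qk f k))).
have ND_D : forall i j k, ND (D i j k).
  by move=> i j k; apply: ND_iter => //; exact: Q_ND.
pose A (n : nat) : set B := match @unpickle ((nat * nat * nat) + nat)%type n with
  | Some (inl (i, j, k)) => D i j k
  | Some (inr k) => ~` O k
  | None => set0 end.
exists (~` \bigcup_n A n); split.
  exists A; split => // n; rewrite /A.
  case: (unpickle n) => [[[[i j] k]|k]|].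
  - exact: ND_nd.
  - exact: ND_nd.
  - by rewrite /nowhere_dense closure0 interior0.
move=> b Rb.
have nA : forall n, ~ A n b by move=> n An; apply: Rb; exists n.
have nD : forall i j k, ~ D i j k b.
  move=> i j k; have := nA (pickle (inl (i, j, k) : ((nat * nat * nat) + nat)%type)).
  by rewrite /A pickleK.
have Ob : forall k, O k b.
  move=> k; have := nA (pickle (inr k : ((nat * nat * nat) + nat)%type)).
  by rewrite /A pickleK => /contrapT.
have Hb : homeo_part f b.
  apply: homeo_of_uniq => // i j u v fuv e.
  apply: contrapT => nuv.
  have [k Hk] := sep_k hB nuv.
  apply: (nD i j k); apply/pres_mem; rewrite -e.
  apply: imgs_mem; apply: subset_closure.
  exists u, v; split => //; split => //.
  move=> b1; apply: (Hk k (leqnn k)); apply: le_ball b1.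
  by rewrite lerDl ltW // ek0.
have [t0 [Mt0 pt0]] := fne b.
have cov : forall k, exists s : 'I_N -> E, forall y, fibre p M b y ->
    exists i, ball (s i) (k.+1%:R^-1 : R) y.
  move=> k; have [s Hs] := Ob k; exists s => y [My pyb].
  by have [i Hi] := Hs y My pyb; exists i; apply: interior_subset.
have nbig := cover_card t0 hE cov.
have finb : finite_set (fibre p M b).
  apply/finite_setPn => H; apply: nbig.
  apply: card_le_trans H; exact: subset_card_le.
have [n cn] := finb.
have Nn : (N <= n)%N by apply: Nmin; apply/asboolP; exists b.
have nN : (n <= N)%N.
  rewrite leqNgt; apply/negP => Nlt; apply: nbig.
  apply: (@card_le_trans _ _ _ `I_n); first by rewrite card_le_II.
  by have [_ ?] := (card_eqPle _ _).1 cn.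
by have -> : N = n by apply/eqP; rewrite eqn_leq Nn nN.
Qed.
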